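(* For every implication of canonical form $(\ast)$ and every environment $\eta$ of ordinary variables, if the Parametricity Condition holds for the implication and $\eta$, then the implication is binary $\eta$-valid, i.e. $\bigwedge_i\varphi_i*a_{i,1}*\cdots*a_{i,M_i}\models^2_\eta\bigvee_j\psi_j*b_{j,1}*\cdots*b_{j,N_j}$.
   Context: $\mathsf{Heap}$: finite partial functions $\mathsf{PosInt}\to\mathsf{Int}$; $g\sqsubseteq h$ means $h$ extends $g$; $h\cdot g$ is union of disjoint heaps; componentwise on $\mathsf{Heap}^n$. $\mathsf{IRel}_n$: upward closed subsets of $\mathsf{Heap}^n$; $p*q=\{\mathbf f\cdot\mathbf g\mid\mathbf f\in p,\mathbf g\in q,\text{componentwise disjoint}\}$. $\Delta_n(X)=\{(h_1,\dots,h_n)\mid\exists f\in X.\ \forall k.\ f\sqsubseteq h_k\}$ for $X\subseteq\mathsf{Heap}$. Assertions: built from primitive assertions $P$ (e.g. $E\hookrightarrow F$), assertion variables, $\mathsf{true},\mathsf{false},\wedge,\vee,*$, quantifiers over integer variables. $n$-ary meaning under $\eta$ (ordinary variables to integers) and $\rho:\mathsf{AVar}\to\mathsf{IRel}_n$: $[\![P]\!]^n=\Delta_n([\![P]\!]^{\mathrm{prim}}_\eta)$ with $[\![P]\!]^{\mathrm{prim}}_\eta\subseteq\mathsf{Heap}$ the standard meaning, $[\![a]\!]^n=\rho(a)$, connectives by $\mathsf{Heap}^n,\emptyset,\cap,\cup,*$, unions/intersections over integer values. $\varphi\models^n_\eta\psi$ ($n$-ary $\eta$-validity) means $[\![\varphi]\!]^n_{\eta,\rho}\subseteq[\![\psi]\!]^n_{\eta,\rho}$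 for all $\rho:\mathsf{AVar}\to\mathsf{IRel}_n$. Canonical form $(\ast)$: $\bigwedge_{i=1}^M\varphi_i*a_{i,1}*\cdots*a_{i,M_i}\Rightarrow\bigvee_{j=1}^N\psi_j*b_{j,1}*\cdots*b_{j,N_j}$ with $M\ge1$, $N\ge0$, $\varphi_i,\psi_j$ free of assertion variables (so their meanings do not depend on $\rho$; write $[\![\varphi_i]\!]^1_\eta$), and every $b_{j,k}$ occurring among the $a_{i,k}$. Let $V=\{a_{i,k}\}$, $\Pi(i)(c)=|\{k\mid a_{i,k}=c\}|$, $\Omega(j)(c)=|\{k\mid b_{j,k}=c\}|$ for $c\in V$; $\Pi(i)\ge\Omega(j)$ means $\Pi(i)(c)\ge\Omega(j)(c)$ for all $c\in V$. Disjunct $j$ is empty if $N_j=0$. Parametricity Condition (PC) for the implication and $\eta$: for all $h,h_1,\dots,h_M\in\mathsf{Heap}$ with $h_i\sqsubseteq h$ and $h_i\in[\![\varphi_i]\!]^1_\eta$ for all $i$, at least one of: (1) there are $i,j$ with $h_i\in[\![\psi_j]\!]^1_\eta$ and $\Pi(i)\ge\Omega(j)$; (2) there is $j$ with disjunct $j$ empty and $h\in[\![\psi_j]\!]^1_\eta$. *)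

(* Defs.v *)
From Stdlib Require Import ZArith PArith List Arith Fin.
Import ListNotations.
Set Implicit Arguments.

Record Heap : Type := MkHeap {
  hfun : positive -> option Z;
  hfin : exists l : list positive, forall x, hfun x <> None -> In x l
}.

Definition hle (g h : Heap) : Prop :=
  forall x v, hfun g x = Some v -> hfun h x = Some v.

Definition hunion (f g h : Heap) : Prop :=
  (forall x, hfun f x = None \/ hfun g x = None) /\
  (forall x, hfun h x = match hfun f x with Some v => Some v | None => hfun g x end).

Definition HTuple (n : nat) := Fin.t n -> Heap.

Definition hle_n {n} (g h : HTuple n) : Prop := forall k, hle (g k) (h k).

Definition upclosed {n} (p : HTuple n -> Prop) : Prop :=
  forall g h, hle_n g h -> p g -> p h.

Definition starR {n} (p q : HTuple n -> Prop) : HTuple n -> Prop :=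
  fun h => exists f g, p f /\ q g /\ forall k, hunion (f k) (g k) (h k).

Definition Delta {n} (X : Heap -> Prop) : HTuple n -> Prop :=
  fun h => exists f, X f /\ forall k, hle f (h k).

Definition var := nat.
Definition avar := nat.
Definition env := var -> Z.

Definition upd (eta : env) (x : var) (v : Z) : env :=
  fun y => if Nat.eqb y x then v else eta y.

(** Primitive assertions are a parameter [Prim], with standard (unary)
    meaning [primsem : Prim -> env -> Heap -> Prop]. *)
Inductive assn (Prim : Type) : Type :=
| APrim : Prim -> assn Prim
| AVar : avar -> assn Prim
| ATrue : assn Prim
| AFalse : assn Prim
| AAnd : assn Prim -> assn Prim -> assn Prim
| AOr : assn Prim -> assn Prim -> assn Prim
| AStar : assn Prim -> assn Prim -> assn Prim
| AEx : var -> assn Prim -> assn Prim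
| AAll : var -> assn Prim -> assn Prim.
Arguments APrim {Prim}.
Arguments AVar {Prim}.
Arguments ATrue {Prim}.
Arguments AFalse {Prim}.
Arguments AAnd {Prim}.
Arguments AOr {Prim}.
Arguments AStar {Prim}.
Arguments AEx {Prim}.
Arguments AAll {Prim}.

Fixpoint sem {Prim : Type} (primsem : Prim -> env -> Heap -> Prop) (n : nat)
  (eta : env) (rho : avar -> HTuple n -> Prop) (A : assn Prim) : HTuple n -> Prop :=
  match A with
  | APrim P => Delta (primsem P eta)
  | AVar a => rho a
  | ATrue => fun _ => True
  | AFalse => fun _ => False
  | AAnd A B => fun h => sem primsem eta rho A h /\ sem primsem eta rho B h
  | AOr A B => fun h => sem primsem eta rho A h \/ sem primsem eta rho B h
  | AStar A B => starR (sem primsem eta rho A) (sem primsem eta rho B)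
  | AEx x A => fun h => exists v : Z, sem primsem (upd eta x v) rho A h
  | AAll x A => fun h => forall v : Z, sem primsem (upd eta x v) rho A h
  end.

Definition valid_n {Prim : Type} (primsem : Prim -> env -> Heap -> Prop) (n : nat)
  (eta : env) (phi psi : assn Prim) : Prop :=
  forall rho : avar -> HTuple n -> Prop,
    (forall a, upclosed (rho a)) ->
    forall h, sem primsem eta rho phi h -> sem primsem eta rho psi h.

Fixpoint avar_free {Prim : Type} (A : assn Prim) : Prop :=
  match A with
  | AVar _ => False
  | APrim _ | ATrue | AFalse => True
  | AAnd A B | AOr A B | AStar A B => avar_free A /\ avar_free B
  | AEx _ A | AAll _ A => avar_free A
  end.

(** unary meaning [[phi]]^1_eta of an assertion-variable-free phi, as a set of
    heaps (rho is irrelevant for such phi; we take the full relation). *)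
Definition sem1 {Prim : Type} (primsem : Prim -> env -> Heap -> Prop) (eta : env)
  (A : assn Prim) (h : Heap) : Prop :=
  sem primsem (n := 1) eta (fun _ _ => True) A (fun _ => h).

Definition starVars {Prim : Type} (phi : assn Prim) (as_ : list avar) : assn Prim :=
  fold_left (fun acc a => AStar acc (AVar a)) as_ phi.

Fixpoint bigAnd {Prim : Type} (l : list (assn Prim)) : assn Prim :=
  match l with
  | [] => ATrue
  | [x] => x
  | x :: l' => AAnd x (bigAnd l')
  end.
Fixpoint bigOr {Prim : Type} (l : list (assn Prim)) : assn Prim :=
  match l with
  | [] => AFalse
  | [x] => x
  | x :: l' => AOr x (bigOr l')
  end.

(** A canonical implication is given by the list of antecedent conjuncts
    (phi_i, [a_{i,1};...;a_{i,M_i}]) and consequent disjuncts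
    (psi_j, [b_{j,1};...;b_{j,N_j}]). *)
Definition canonical {Prim : Type} (L : list (assn Prim * list avar))
  (R : list (assn Prim * list avar)) : Prop :=
  1 <= length L /\
  (forall p, In p L -> avar_free (fst p)) /\
  (forall q, In q R -> avar_free (fst q)) /\
  (forall q b, In q R -> In b (snd q) -> exists p, In p L /\ In b (snd p)).

Definition lhs {Prim : Type} (L : list (assn Prim * list avar)) : assn Prim :=
  bigAnd (map (fun p => starVars (fst p) (snd p)) L).
Definition rhs {Prim : Type} (R : list (assn Prim * list avar)) : assn Prim :=
  bigOr (map (fun q => starVars (fst q) (snd q)) R).

(** V = set of all a_{i,k}; Pi(i) >= Omega(j) as multiplicity functions on V *)
Definition mult_ge {Prim : Type} (L : list (assn Prim * list avar))
  (as_ bs : list avar) : Prop :=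
  forall c, (exists p, In p L /\ In c (snd p)) ->
    count_occ Nat.eq_dec bs c <= count_occ Nat.eq_dec as_ c.

Definition PC {Prim : Type} (primsem : Prim -> env -> Heap -> Prop)
  (L R : list (assn Prim * list avar)) (eta : env) : Prop :=
  forall (h : Heap) (hs : nat -> Heap),
    (forall i, i < length L ->
       hle (hs i) h /\ sem1 primsem eta (fst (nth i L (ATrue, []))) (hs i)) ->
    (exists i j, i < length L /\ j < length R /\
       sem1 primsem eta (fst (nth j R (ATrue, []))) (hs i) /\
       mult_ge L (snd (nth i L (ATrue, []))) (snd (nth j R (ATrue, []))))
    \/
    (exists j, j < length R /\ snd (nth j R (ATrue, [])) = [] /\
       sem1 primsem eta (fst (nth j R (ATrue, []))) h).

(* Main.v *)
Require Import Defs.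
From Stdlib Require Import ZArith List Permutation Lia ClassicalEpsilon.
Import ListNotations.

Definition hmeet (a b : Heap) : Heap.
refine (MkHeap (fun x => match hfun a x, hfun b x with
  | Some v, Some w => if Z.eq_dec v w then Some v else None | _, _ => None end) _).
destruct (hfin a) as [l Hl]. exists l. intros x Hx. apply Hl. intro E.
rewrite E in Hx. apply Hx. reflexivity.
Defined.

Definition hminus (h f : Heap) : Heap.
refine (MkHeap (fun x => match hfun f x with Some _ => None | None => hfun h x end) _).
destruct (hfin h) as [l Hl]. exists l. intros x Hx. apply Hl. intro E.
apply Hx. destruct (hfun f x); [reflexivity|exact E].
Defined.

Definition hjoin (f g : Heap) : Heap.
refine (MkHeap (fun x => match hfun f x with Some v => Some v | None => hfun g x end) _).
destruct (hfin f) as [l1 H1]. destruct (hfin g) as [l2 H2]. exists (l1 ++ l2).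
intros x Hx. apply in_or_app. destruct (hfun f x) eqn:E.
left; apply H1; congruence. right; apply H2; exact Hx.
Defined.

Ltac crush := repeat match goal with
 | H : forall v, Some ?z = Some v -> _ |- _ => specialize (H z eq_refl)
 | H : forall v, None = Some v -> _ |- _ => clear H
 end; try congruence; intuition congruence.

Lemma hle_refl h : hle h h.
Proof. intros x v; auto. Qed.
Lemma hle_trans a b c : hle a b -> hle b c -> hle a c.
Proof. unfold hle; eauto. Qed.

Lemma star_swap {n} (P A B : HTuple n -> Prop) h :
  starR (starR P A) B h -> starR (starR P B) A h.
Proof.
  intros [f' [gb [[f [ga [Hf [Ha Hu1]]]] [Hb Hu2]]]].
  exists (fun k => hjoin (f k) (gb k)), ga. split; [|split; [exact Ha|]].
  - exists f, gb. split; [exact Hf|split; [exact Hb|]]. intro k.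
    destruct (Hu1 k) as [D1 E1]; destruct (Hu2 k) as [D2 E2].
    split; intro x; specialize (D1 x); specialize (E1 x); specialize (D2 x); specialize (E2 x);
    cbn; destruct (hfun (f k) x), (hfun (ga k) x), (hfun (gb k) x), (hfun (f' k) x), (hfun (h k) x); crush.
  - intro k.
    destruct (Hu1 k) as [D1 E1]; destruct (Hu2 k) as [D2 E2].
    split; intro x; specialize (D1 x); specialize (E1 x); specialize (D2 x); specialize (E2 x);
    cbn; destruct (hfun (f k) x), (hfun (ga k) x), (hfun (gb k) x), (hfun (f' k) x), (hfun (h k) x); crush.
Qed.
Lemma sem_up {Prim : Type} (ps : Prim -> env -> Heap -> Prop) (n : nat) (rho : avar -> HTuple n -> Prop)
  (Hr : forall a, upclosed (rho a)) (A : assn Prim) :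
  forall eta h h', hle_n h h' -> sem ps eta rho A h -> sem ps eta rho A h'.
Proof.
  induction A; intros eta h h' Hle Hs; simpl in *.
  - destruct Hs as [f [Hf Hl]]. exists f; split; auto. intro k; eapply hle_trans; eauto.
  - eapply Hr; eauto.
  - auto.
  - auto.
  - destruct Hs; split; eauto.
  - destruct Hs; [left|right]; eauto.
  - destruct Hs as [f [g [Hf [Hg Hu]]]].
    exists f, (fun k => hminus (h' k) (f k)). split; [exact Hf|split].
    + apply (IHA2 eta g); auto. intros k x v Hx. specialize (Hle k x).
      destruct (Hu k) as [D E]. specialize (D x); specialize (E x). cbn.
      destruct (hfun (f k) x), (hfun (g k) x), (hfun (h k) x), (hfun (h' k) x); crush.
    + intro k. specialize (Hle k). destruct (Hu k) as [D E].
      split; intro x; specialize (Hle x); specialize (D x); specialize (E x); cbn;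
      destruct (hfun (f k) x), (hfun (g k) x), (hfun (h k) x), (hfun (h' k) x); crush.
  - destruct Hs as [z Hz]; exists z; eauto.
  - intro z; eauto.
Qed.

Definition G {n} (rho : avar -> HTuple n -> Prop) (P : HTuple n -> Prop) (l : list avar) :=
  fold_left (fun X a => starR X (rho a)) l P.

Lemma sem_starVars {Prim : Type} (ps : Prim -> env -> Heap -> Prop) (n : nat) eta (rho : avar -> HTuple n -> Prop) l :
  forall phi h, sem ps eta rho (starVars phi l) h <-> G rho (sem ps eta rho phi) l h.
Proof.
  induction l as [|a l IH]; intros phi h; simpl. tauto.
  apply (IH (AStar phi (AVar a)) h).
Qed.

Lemma star_mono {n} (P Q A : HTuple n -> Prop) h :
  (forall x, P x -> Q x) -> starR P A h -> starR Q A h.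
Proof. intros HPQ [f [g [Hf [Hg Hu]]]]. exists f, g; auto. Qed.

Lemma G_mono {n} rho l : forall (P Q : HTuple n -> Prop) h,
  (forall x, P x -> Q x) -> G rho P l h -> G rho Q l h.
Proof.
  induction l as [|a l IH]; intros P Q h HPQ; simpl; auto.
  apply IH. intro x; apply star_mono; auto.
Qed.

Lemma G_perm {n} (rho : avar -> HTuple n -> Prop) l l' : Permutation l l' ->
  forall P h, G rho P l h -> G rho P l' h.
Proof.
  induction 1; intros P h; simpl; auto.
  intro H0. eapply G_mono; [|exact H0]. intro z; apply star_swap.
Qed.

Lemma G_app {n} (rho : avar -> HTuple n -> Prop) l1 l2 P h :
  G rho P (l1 ++ l2) h -> G rho (G rho P l1) l2 h.
Proof. unfold G; rewrite fold_left_app; auto. Qed.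

Definition same {n} (f x : HTuple n) := forall k y, hfun (f k) y = hfun (x k) y.

Lemma G_extract {n} (rho : avar -> HTuple n -> Prop) l : forall P h,
  G rho P l h -> exists f, P f /\ G rho (same f) l h.
Proof.
  induction l as [|a l IH]; intros P h H; simpl in *.
  - exists h; split; auto. intros k y; reflexivity.
  - destruct (IH _ _ H) as [f' [[f [g [Hf [Hg Hu]]]] H2]].
    exists f; split; auto. eapply G_mono; [|exact H2].
    intros x Hx. exists f, g. split; [intros k y; reflexivity|split; auto].
    intro k. destruct (Hu k) as [D E]. split; auto. intro y. rewrite <- Hx. auto.
Qed.

Lemma G_below {n} (rho : avar -> HTuple n -> Prop) l : forall P h,
  G rho P l h -> exists f, P f /\ hle_n f h.
Proof.
  induction l as [|a l IH]; intros P h H; simpl in *.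
  - exists h; split; auto. intro k; apply hle_refl.
  - destruct (IH _ _ H) as [f' [[f [g [Hf [Hg Hu]]]] H2]].
    exists f; split; auto. intro k. eapply hle_trans; [|apply H2].
    intros x v Hx. destruct (Hu k) as [D E]. rewrite E, Hx; auto.
Qed.
Lemma fin1 (k : Fin.t 1) : k = Fin.F1.
Proof. apply (Fin.caseS' k); [reflexivity|]. intro p; inversion p. Qed.
Lemma fin2 (k : Fin.t 2) : k = Fin.F1 \/ k = Fin.FS Fin.F1.
Proof.
  apply (Fin.caseS' k); [left; reflexivity|]. intro p.
  apply (Fin.caseS' p); [right; reflexivity|]. intro q; inversion q.
Qed.

Lemma hmeet_l a b : hle (hmeet a b) a.
Proof. intros x v; cbn. destruct (hfun a x), (hfun b x); try destruct Z.eq_dec; congruence. Qed.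
Lemma hmeet_r a b : hle (hmeet a b) b.
Proof. intros x v; cbn. destruct (hfun a x), (hfun b x); try destruct Z.eq_dec; congruence. Qed.
Lemma hmeet_glb f a b : hle f a -> hle f b -> hle f (hmeet a b).
Proof. intros Ha Hb x v Hx; cbn. rewrite (Ha x v Hx), (Hb x v Hx). destruct Z.eq_dec; congruence. Qed.

Definition meet2 (F : HTuple 2) := hmeet (F Fin.F1) (F (Fin.FS Fin.F1)).

Lemma meet2_le F : hle_n (fun _ => meet2 F) F.
Proof. intro k. destruct (fin2 k) as [->| ->]; [apply hmeet_l|apply hmeet_r]. Qed.

Lemma sem_meet {Prim : Type} (ps : Prim -> env -> Heap -> Prop) (rho : avar -> HTuple 2 -> Prop)
  (A : assn Prim) : avar_free A ->
  forall eta F, sem ps eta rho A F -> sem1 ps eta A (meet2 F).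
Proof.
  unfold sem1; induction A; intros Hfree eta F Hs; simpl in *.
  - destruct Hs as [f [Hf Hl]]. exists f; split; auto. intro k.
    apply hmeet_glb; apply Hl.
  - contradiction.
  - auto.
  - auto.
  - destruct Hfree, Hs; split; eauto.
  - destruct Hfree; destruct Hs; [left|right]; eauto.
  - destruct Hfree as [Hf1 Hf2]. destruct Hs as [f [g [Hf [Hg Hu]]]].
    exists (fun _ => meet2 f), (fun _ => hminus (meet2 F) (meet2 f)). split; [eauto|split].
    + eapply sem_up; [| |apply (IHA2 Hf2 eta g Hg)].
      * intros a x y _ _; exact I.
      * intros k x v Hx. unfold meet2 in *. cbn in *.
        destruct (Hu Fin.F1) as [D1 E1]; destruct (Hu (Fin.FS Fin.F1)) as [D2 E2].
        specialize (D1 x); specialize (E1 x); specialize (D2 x); specialize (E2 x).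
        destruct (hfun (f Fin.F1) x), (hfun (f (Fin.FS Fin.F1)) x),
          (hfun (g Fin.F1) x), (hfun (g (Fin.FS Fin.F1)) x),
          (hfun (F Fin.F1) x), (hfun (F (Fin.FS Fin.F1)) x);
        repeat destruct Z.eq_dec; crush.
    + intro k. unfold meet2 in *. 
      destruct (Hu Fin.F1) as [D1 E1]; destruct (Hu (Fin.FS Fin.F1)) as [D2 E2].
      split; intro x; cbn;
        specialize (D1 x); specialize (E1 x); specialize (D2 x); specialize (E2 x);
        destruct (hfun (f Fin.F1) x), (hfun (f (Fin.FS Fin.F1)) x),
          (hfun (g Fin.F1) x), (hfun (g (Fin.FS Fin.F1)) x),
          (hfun (F Fin.F1) x), (hfun (F (Fin.FS Fin.F1)) x);
        repeat destruct Z.eq_dec; crush.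
  - destruct Hs as [z Hz]; exists z; eauto.
  - intro z; eauto.
Qed.

Lemma sem_diag {Prim : Type} (ps : Prim -> env -> Heap -> Prop) (n : nat) (rho : avar -> HTuple n -> Prop)
  (A : assn Prim) : avar_free A ->
  forall eta x, sem1 ps eta A x -> sem ps eta rho A (fun _ => x).
Proof.
  unfold sem1; induction A; intros Hfree eta x Hs; simpl in *.
  - destruct Hs as [f [Hf Hl]]. exists f; split; auto. intro k; apply (Hl Fin.F1).
  - contradiction.
  - auto.
  - auto.
  - destruct Hfree, Hs; split; eauto.
  - destruct Hfree; destruct Hs; [left|right]; eauto.
  - destruct Hfree as [Hf1 Hf2]. destruct Hs as [f [g [Hf [Hg Hu]]]].
    assert (Hup : upclosed (n := 1) (fun _ : HTuple 1 => True)) by (intros y z _ _; exact I).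
    exists (fun _ => f Fin.F1), (fun _ => g Fin.F1). split; [|split].
    + apply IHA1; auto. eapply sem_up; [exact (fun _ => Hup)| |exact Hf].
      intro k; rewrite (fin1 k); apply hle_refl.
    + apply IHA2; auto. eapply sem_up; [exact (fun _ => Hup)| |exact Hg].
      intro k; rewrite (fin1 k); apply hle_refl.
    + intro k; apply (Hu Fin.F1).
  - destruct Hs as [z Hz]; exists z; eauto.
  - intro z; eauto.
Qed.

Lemma perm_counts (bs : list avar) : forall as_ : list avar,
  (forall c, count_occ Nat.eq_dec bs c <= count_occ Nat.eq_dec as_ c) ->
  exists rest, Permutation as_ (rest ++ bs).
Proof.
  induction bs as [|b bs IH]; intros as_ H.
  - exists as_. rewrite app_nil_r; auto.
  - assert (Hb : In b as_).
    { apply (count_occ_In Nat.eq_dec). specialize (H b). simpl in H.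
      destruct Nat.eq_dec; [lia|congruence]. }
    destruct (in_split _ _ Hb) as [l1 [l2 ->]].
    destruct (IH (l1 ++ l2)) as [rest Hr].
    { intro c. specialize (H c). rewrite count_occ_app in *. simpl in H.
      destruct Nat.eq_dec; lia. }
    exists rest. eapply perm_trans; [apply Permutation_sym, Permutation_middle|].
    eapply perm_trans; [apply perm_skip, Hr|]. apply Permutation_middle.
Qed.

Lemma bigAnd_sem {Prim : Type} (ps : Prim -> env -> Heap -> Prop) (n : nat) eta (rho : avar -> HTuple n -> Prop) l h :
  sem ps eta rho (bigAnd l) h -> forall A, In A l -> sem ps eta rho A h.
Proof.
  induction l as [|x l IH]; [simpl; tauto|].
  destruct l as [|y l'].
  - intros H A [<-|[]]; auto.
  - intros [H1 H2] A [<-|HA]; auto.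
Qed.

Lemma bigOr_sem {Prim : Type} (ps : Prim -> env -> Heap -> Prop) (n : nat) eta (rho : avar -> HTuple n -> Prop) l h :
  forall A, In A l -> sem ps eta rho A h -> sem ps eta rho (bigOr l) h.
Proof.
  induction l as [|x l IH]; [simpl; tauto|].
  destruct l as [|y l'].
  - intros A [<-|[]]; auto.
  - intros A [<-|HA] H; [left|right]; eauto.
Qed.
Theorem mainTheorem4 (Prim : Type) (primsem : Prim -> env -> Heap -> Prop)
  (L R : list (assn Prim * list avar)) (eta : env) :
  canonical L R ->
  PC primsem L R eta ->
  valid_n primsem 2 eta (lhs L) (rhs R).
Proof.
  intros [HL1 [HLf [HRf HRb]]] HPC rho Hr h Hlhs.
  set (d := (@ATrue Prim, @nil avar)).
  assert (Hi : forall i, exists F, i < length L ->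
     sem primsem eta rho (fst (nth i L d)) F /\ G rho (same F) (snd (nth i L d)) h).
  { intro i. destruct (Nat.lt_ge_cases i (length L)) as [Hlt|Hge].
    - assert (Hs : sem primsem eta rho (starVars (fst (nth i L d)) (snd (nth i L d))) h).
      { eapply bigAnd_sem; [exact Hlhs|]. apply in_map_iff. exists (nth i L d).
        split; [reflexivity|]. apply nth_In; auto. }
      apply sem_starVars in Hs. destruct (G_extract _ _ _ _ Hs) as [F [HF HG]].
      exists F; auto.
    - exists h; intro; lia. }
  destruct (choice _ Hi) as [Fs HFs].
  destruct (HPC (meet2 h) (fun i => meet2 (Fs i))) as
    [[i [j [Hil [Hjl [Hpsi Hm]]]]] | [j [Hjl [Hnil Hpsi]]]].
  - intros i Hil. destruct (HFs i Hil) as [HF HG]. split.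
    + destruct (G_below _ _ _ _ HG) as [f [Hsf Hle]].
      assert (HFh : hle_n (Fs i) h).
      { intros k x v Hx. apply Hle. rewrite <- Hsf. exact Hx. }
      apply hmeet_glb; eapply hle_trans; [apply hmeet_l| apply HFh| apply hmeet_r| apply HFh].
    + eapply sem_meet; [|exact HF]. apply HLf, nth_In; auto.
  - destruct (HFs i Hil) as [HF HG].
    assert (HjR : In (nth j R d) R) by (apply nth_In; auto).
    eapply bigOr_sem.
    { apply in_map_iff. exists (nth j R d). split; [reflexivity|exact HjR]. }
    apply sem_starVars.
    destruct (perm_counts (snd (nth j R d)) (snd (nth i L d))) as [rest Hperm].
    { intro c. destruct (count_occ Nat.eq_dec (snd (nth j R d)) c) eqn:E; [lia|].
      rewrite <- E. apply Hm. apply (HRb _ c HjR).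
      apply (count_occ_In Nat.eq_dec). lia. }
    apply (G_perm _ _ _ Hperm) in HG. apply G_app in HG.
    eapply G_mono; [|exact HG]. intros x Hx.
    destruct (G_below _ _ _ _ Hx) as [f [Hsf Hle]].
    eapply sem_up; [exact Hr| |].
    2:{ eapply sem_up; [exact Hr|apply meet2_le|].
        apply sem_diag; [apply HRf; exact HjR|exact Hpsi]. }
    intros k y v Hy. apply Hle. rewrite <- Hsf. exact Hy.
  - assert (HjR : In (nth j R d) R) by (apply nth_In; auto).
    eapply bigOr_sem.
    { apply in_map_iff. exists (nth j R d). split; [reflexivity|exact HjR]. }
    fold d in Hnil. rewrite Hnil. simpl.
    eapply sem_up; [exact Hr|apply meet2_le|].
    apply sem_diag; [apply HRf; exact HjR|exact Hpsi].
Qed.
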